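(* Let $\pi$ be a uniformly $\rho$-robust, cost-invariant oracle for an objective $\boldsymbol{\mathcal{G}}$ with mistake constant $M^\pi_\rho$. Let $(\boldsymbol{x},\boldsymbol{u})$ be a trajectory and $\mathcal{I}=[t_1,t_2]$ a time interval such that the restriction $(x_{\mathcal{I}},u_{\mathcal{I}})$ belongs to $\bigcup_{\theta\in\mathsf{K}}\mathcal{S}_{\mathcal{I}}[\rho;\theta]$. Then: (i) if $s\in\mathcal{I}$, $s<t_2$, and $\mathcal{G}_s(x_s,u_s)=0$, then $\mathcal{G}_{s+1}(x_{s+1},u_{s+1})=0$; (ii) $\mathcal{G}_s(x_s,u_s)=0$ for all $s$ with $t_1+M^\pi_\rho\le s\le t_2$; (iii) if $\mathcal{G}_{t_1}(x_{t_1},u_{t_1})=0$ then $\sum_{t\in\mathcal{I}}\mathcal{G}_t(x_t,u_t)=0$; (iv) if $\mathcal{G}_{t_2}(x_{t_2},u_{t_2})=1$ then $|\mathcal{I}|\le M^\pi_\rho$.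
   Context: $\mathcal{X}$ (normed) and $\mathcal{U}$ are sets; $\mathcal{F}$ is a set of functions $\mathbb{N}\times\mathcal{X}\times\mathcal{U}\to\mathcal{X}$ with compact parametrization $(\mathbb{T},\mathsf{K},d)$: $(\mathsf{K},d)$ compact metric, $\mathbb{T}:\mathsf{K}\to2^{\mathcal{F}}$, $\mathcal{F}\subseteq\bigcup_\theta\mathbb{T}[\theta]$. An objective is a sequence $\mathcal{G}_t:\mathcal{X}\times\mathcal{U}\to\{0,1\}$; $\pi:\mathsf{K}\to\mathcal{C}$ with $\mathcal{C}$ the maps $\mathbb{N}\times\mathcal{X}\to\mathcal{U}$. For $\mathcal{I}=[t_1,t_2]$, $\theta\in\mathsf{K}$: $\mathcal{S}_{\mathcal{I}}[\rho;\theta]$ is the set of pairs $(x_{t_1..t_2}),(u_{t_1..t_2})$ for which there exist $f\in\mathbb{T}[\theta]$ and $\theta_k$ with $d(\theta_k,\theta)\le\rho$ such that $u_k=\pi[\theta_k](k,x_k)$ ($k\in\mathcal{I}$) and $x_{k+1}=f(k,x_k,u_k)$ ($k<t_2$). $m^\pi_\rho(\gamma;\theta)=\sup_{\mathcal{I}=[t,t'],t<t'}\sup\{\sum_{s\in\mathcal{I}}\mathcal{G}_s(x_s,u_s):(x_{\mathcal{I}},u_{\mathcal{I}})\in\mathcal{S}_{\mathcal{I}}[\rho;\theta],\|x_t\|\le\gamma\}$; $\pi$ is an oracle if $m^\pi_0<\infty$ everywhere, uniformly $\rho$-robust if $M^\pi_\rho:=\sup_{\gamma,\theta}m^\pi_\rho(\gamma;\theta)<\infty$.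 With $\mathsf{X}_t=\{x:\exists u,\mathcal{G}_t(x,u)=0\}$, cost invariance means: for all $\theta\in\mathsf{K},t\ge0$, $\mathcal{G}_t(x,\pi[\theta](t,x))=0$ for $x\in\mathsf{X}_t$, and $f(t,x,\pi[\theta'](t,x))\in\mathsf{X}_{t+1}$ for $x\in\mathsf{X}_t$, $f\in\mathbb{T}[\theta]$, $d(\theta',\theta)\le\rho$. *)

(* Defs.v *)
From HB Require Import structures.
From mathcomp Require Import all_boot all_order all_algebra.
From mathcomp Require Import all_classical all_reals all_analysis.
Set Implicit Arguments. Unset Strict Implicit. Unset Printing Implicit Defensive.
Import Order.TTheory GRing.Theory Num.Theory.
Import numFieldNormedType.Exports.
Local Open Scope classical_set_scope.
Local Open Scope ring_scope.

Section Defs.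
Context {R : realType} {X : normedModType R} {U K : Type}.

Definition is_metric (d : K -> K -> R) : Prop :=
  [/\ (forall a b, 0 <= d a b),
      (forall a b, d a b = 0 <-> a = b),
      (forall a b, d a b = d b a) &
      (forall a b c, d a c <= d a b + d b c)].

Definition metric_compact (d : K -> K -> R) : Prop :=
  forall s : nat -> K, exists (phi : nat -> nat) (l : K),
    (forall n, (phi n < phi n.+1)%N) /\
    (forall e : R, 0 < e -> exists N, forall n, (N <= n)%N -> d (s (phi n)) l < e).

Definition compact_parametrization (F : set (nat -> X -> U -> X))
  (T : K -> set (nat -> X -> U -> X)) (d : K -> K -> R) : Prop :=
  [/\ is_metric d, metric_compact d &
      F `<=` \bigcup_(th in [set: K]) T th].

Definition in_S (T : K -> set (nat -> X -> U -> X)) (d : K -> K -> R)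
  (pi : K -> nat -> X -> U) (rho : R) (t1 t2 : nat) (th : K)
  (x : nat -> X) (u : nat -> U) : Prop :=
  exists (f : nat -> X -> U -> X) (ths : nat -> K),
    [/\ T th f,
        (forall k, (t1 <= k <= t2)%N -> d (ths k) th <= rho),
        (forall k, (t1 <= k <= t2)%N -> u k = pi (ths k) k (x k)) &
        (forall k, (t1 <= k < t2)%N -> x k.+1 = f k (x k) (u k))].

Definition cost (G : nat -> X -> U -> bool) (x : nat -> X) (u : nat -> U)
  (t1 t2 : nat) : nat :=
  (\sum_(t1 <= s < t2.+1) (G s (x s) (u s) : nat))%N.

Definition mistake_fn (T : K -> set (nat -> X -> U -> X)) (d : K -> K -> R)
  (pi : K -> nat -> X -> U) (G : nat -> X -> U -> bool) (rho gamma : R) (th : K)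
  : \bar R :=
  ereal_sup [set r | exists (t t' : nat) (x : nat -> X) (u : nat -> U),
     [/\ (t < t')%N, in_S T d pi rho t t' th x u, `|x t| <= gamma &
          r = ((cost G x u t t')%:R)%:E]].

Definition mistake_const (T : K -> set (nat -> X -> U -> X)) (d : K -> K -> R)
  (pi : K -> nat -> X -> U) (G : nat -> X -> U -> bool) (rho : R) : \bar R :=
  ereal_sup [set r | exists (gamma : R) (th : K), r = mistake_fn T d pi G rho gamma th].

Definition is_oracle T d pi G : Prop :=
  forall gamma th, (mistake_fn T d pi G 0 gamma th < +oo)%E.

Definition unif_robust T d pi G rho : Prop :=
  (mistake_const T d pi G rho < +oo)%E.

Definition Xset (G : nat -> X -> U -> bool) (t : nat) : set X :=
  [set x | exists v, G t x v = false].

Definition cost_invariant (T : K -> set (nat -> X -> U -> X)) (d : K -> K -> R)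
  (pi : K -> nat -> X -> U) (G : nat -> X -> U -> bool) (rho : R) : Prop :=
  forall th t,
    (forall x, Xset G t x -> G t x (pi th t x) = false) /\
    (forall x f th', Xset G t x -> T th f -> d th' th <= rho ->
        Xset G t.+1 (f t x (pi th' t x))).

End Defs.

(* Main.v *)
Require Import Defs.
From HB Require Import structures.
From mathcomp Require Import all_boot all_order all_algebra.
From mathcomp Require Import all_classical all_reals all_analysis.
From mathcomp Require Import lra.
Import Order.TTheory GRing.Theory Num.Theory.
Import numFieldNormedType.Exports.
Local Open Scope classical_set_scope.
Local Open Scope ring_scope.

Section H.
Context (R : realType) (X : normedModType R) (U K : Type)
  (T : K -> set (nat -> X -> U -> X))
  (d : K -> K -> R) (G : nat -> X -> U -> bool) (pi : K -> nat -> X -> U)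
  (rho : R).

Lemma in_S_restr t1 t2 t2' th x u : (t2' <= t2)%N ->
  in_S T d pi rho t1 t2 th x u -> in_S T d pi rho t1 t2' th x u.
Proof.
move=> le [f [ths [Tf Hd Hu Hx]]]; exists f, ths; split => //.
- by move=> k /andP[a b]; apply: Hd; rewrite a (leq_trans b le).
- by move=> k /andP[a b]; apply: Hu; rewrite a (leq_trans b le).
- by move=> k /andP[a b]; apply: Hx; rewrite a (leq_trans b le).
Qed.

Lemma cost_le_M t1 t2 th x u : (t1 <= t2)%N -> is_metric d ->
  in_S T d pi rho t1 t2 th x u ->
  (((cost G x u t1 t2)%:R)%:E <= mistake_const T d pi G rho)%E.
Proof.
move=> le12 md [f [ths [Tf Hd Hu Hx]]].
set x' := fun k => if k == t2.+1 then f t2 (x t2) (u t2) else x k.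
set u' := fun k => if k == t2.+1 then pi th k (x' k) else u k.
set ths' := fun k => if k == t2.+1 then th else ths k.
have rho0 : 0 <= rho.
  case: md => d0 _ _ _; apply: le_trans (Hd t1 _); first exact: d0.
  by rewrite leqnn le12.
have HS : in_S T d pi rho t1 t2.+1 th x' u'.
  exists f, ths'; split => //.
  - move=> k /andP[a b]; rewrite /ths'; case: eqP => [_|/eqP ne].
      by case: md => _ d1 _ _; rewrite (proj2 (d1 th th) erefl).
    by apply: Hd; rewrite a -ltnS ltn_neqAle ne b.
  - move=> k /andP[a b]; rewrite /u' /ths'; case: eqP => [->|/eqP ne] //.
    rewrite /x' (negbTE ne); by apply: Hu; rewrite a -ltnS ltn_neqAle ne b.
  - move=> k /andP[a b]; rewrite /x' /u'.
    case: (eqVneq k t2) => [->|ne].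
      by rewrite eqxx (ltn_eqF (ltnSn t2)).
    have kt2 : (k < t2)%N by rewrite ltn_neqAle ne -ltnS b.
    rewrite (ltn_eqF b).
    by rewrite eqSS (negbTE ne); apply: Hx; rewrite a kt2.
have Hc : (cost G x u t1 t2 <= cost G x' u' t1 t2.+1)%N.
  rewrite /cost (big_nat_recr t2.+1) /=; last by rewrite ltnW // ltnS.
  rewrite (@eq_big_nat _ _ _ t1 t2.+1 (fun i => (G i (x' i) (u' i) : nat)) (fun i => (G i (x i) (u i) : nat))).
    exact: leq_addr.
  move=> i /andP[_ b]; rewrite /x' /u' (ltn_eqF b) //.
apply: le_trans (_ : ((cost G x' u' t1 t2.+1)%:R)%:E <= _)%E.
  by rewrite lee_fin ler_nat.
apply: le_trans (_ : mistake_fn T d pi G rho `|x' t1| th <= _)%E.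
  apply: ereal_sup_ubound; exists t1, t2.+1, x', u'; split => //.
by apply: ereal_sup_ubound; exists `|x' t1|, th.
Qed.

End H.

Theorem mainTheorem12 (R : realType) (X : normedModType R) (U K : Type)
  (F : set (nat -> X -> U -> X)) (T : K -> set (nat -> X -> U -> X))
  (d : K -> K -> R) (G : nat -> X -> U -> bool) (pi : K -> nat -> X -> U)
  (rho : R) :
  compact_parametrization F T d ->
  is_oracle T d pi G ->
  unif_robust T d pi G rho ->
  cost_invariant T d pi G rho ->
  forall (x : nat -> X) (u : nat -> U) (t1 t2 : nat),
  (t1 <= t2)%N ->
  (exists th : K, in_S T d pi rho t1 t2 th x u) ->
  [/\ (forall s, (t1 <= s < t2)%N -> G s (x s) (u s) = false ->
          G s.+1 (x s.+1) (u s.+1) = false),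
      (forall s, (t1%:R%:E + mistake_const T d pi G rho <= s%:R%:E)%E ->
          (s <= t2)%N -> G s (x s) (u s) = false),
      (G t1 (x t1) (u t1) = false -> cost G x u t1 t2 = 0%N) &
      (G t2 (x t2) (u t2) = true ->
          ((t2 - t1).+1%:R%:E <= mistake_const T d pi G rho)%E)].
Proof.
move=> [md _ _] _ ur ci x u t1 t2 le12 [th HS].
have HS' := HS.
case: HS' => f [ths [Tf Hd Hu Hx]].
have P1 : forall s, (t1 <= s < t2)%N -> G s (x s) (u s) = false ->
          G s.+1 (x s.+1) (u s.+1) = false.
  move=> s /andP[a b] Gs.
  have Xs : Xset G s (x s) by exists (u s).
  have Xs1 : Xset G s.+1 (x s.+1).
    rewrite Hx ?a ?b // Hu ?a ?(ltnW b) //.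
    by apply: (proj2 (ci th s)) => //; apply: Hd; rewrite a ltnW.
  rewrite (Hu s.+1) ?b ?(leq_trans a) //.
  exact: (proj1 (ci (ths s.+1) s.+1)).
have Pr : forall k s t', (s + k)%N = t' -> (t1 <= s)%N -> (t' <= t2)%N ->
    G s (x s) (u s) = false -> G t' (x t') (u t') = false.
  elim=> [|k IH] s t' <- a b Gs; first by rewrite addn0.
  apply: (IH s.+1); rewrite ?addSnnS // ?(leq_trans a) //.
  apply: P1 => //; rewrite a /=.
  by apply: leq_trans b; rewrite -addSnnS leq_addr.
have costall : forall t', (t1 <= t' <= t2)%N -> G t' (x t') (u t') = true ->
    cost G x u t1 t' = (t' - t1).+1.
  move=> t' /andP[a b] Gt.
  rewrite /cost -(@eq_big_nat _ _ _ _ _ (fun _ => 1%N)).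
    by rewrite sum_nat_const_nat muln1 subSn.
  move=> i /andP[c e]; case E: (G i (x i) (u i)) => //.
  have : G t' (x t') (u t') = false.
    by apply: (Pr (t' - i)%N i) => //; rewrite subnKC // -ltnS.
  by rewrite Gt.
have P4 : forall t', (t1 <= t' <= t2)%N -> G t' (x t') (u t') = true ->
    ((t' - t1).+1%:R%:E <= mistake_const T d pi G rho)%E.
  move=> t' /andP[a b] Gt; rewrite -costall ?a ?b //.
  by apply: cost_le_M md _; [exact: a | apply: in_S_restr b HS].
split => //.
- move=> s H st2; case E: (G s (x s) (u s)) => //; exfalso.
  have M0 : (0 <= mistake_const T d pi G rho)%E.
    apply: le_trans (@cost_le_M _ _ _ _ T d G pi rho _ _ _ _ _ le12 md HS); by rewrite lee_fin.
  case: (leqP t1 s) => [t1s|st1].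
  + have := P4 s; rewrite t1s st2 => /(_ isT E).
    move: ur H M0; rewrite /unif_robust.
    case: (mistake_const T d pi G rho) => [r| |] //=.
    move=> _ H _ Hs.
    rewrite -EFinD !lee_fin in H Hs.
    rewrite -addn1 natrD natrB // in Hs; lra.
  + move: ur H M0; rewrite /unif_robust.
    case: (mistake_const T d pi G rho) => [r| |] //=.
    move=> _ H M0.
    rewrite -EFinD !lee_fin in H M0.
    have : s%:R < t1%:R :> R by rewrite ltr_nat.
    lra.
- move=> G1; rewrite /cost big_nat_cond big1 // => i /andP[/andP[a b] _].
  by rewrite (Pr (i - t1)%N t1 i) // subnKC.
- by move=> Gt; apply: P4 => //; rewrite le12 leqnn.
Qed.
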